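(* For every $n\in\mathbb{N}$, $\mathcal{SG}(\mathcal{P}_n)=\mathcal{SG}(\mathcal{O}_n)$, where $\mathcal{P}_n$ denotes Grim played on the path with $n$ vertices and $\mathcal{O}_n$ denotes the octal game Octal $.6$ played on a single heap of $n$ chips. That is, the Sprague–Grundy sequence of Grim on paths coincides with the Sprague–Grundy sequence of Octal $.6$.
   Context: Grim is a two-player game on a finite simple undirected graph: any isolated vertices are deleted before play begins (so $\mathcal{P}_1$ has no moves); a move consists of selecting a vertex of the current graph and deleting it together with its incident edges, after which every vertex that has become isolated is also deleted; the last player to move wins. Octal $.6$ is played on a collection of heaps of chips: a move consists of choosing a heap, removing exactly one chip from it, and leaving the remaining chips of that heap as exactly one or exactly two non-empty heaps (so a heap of size $1$ admits no move); the last player to move wins. For a position $X$ of an impartial game, with $\mathcal{F}(X)$ its set of positions reachable in one move, the Sprague–Grundy value is defined recursively by $\mathcal{SG}(X)=\mathrm{mex}\{\mathcal{SG}(Y):Y\in\mathcal{F}(X)\}$, where $\mathrm{mex}$ of a set of non-negative integers is the least non-negative integer not in the set. *)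

(* Defs.v *)
From mathcomp Require Import all_boot.
Set Implicit Arguments. Unset Strict Implicit. Unset Printing Implicit Defensive.

(* mex of a finite set of naturals (given as a list): least n not in s.
   Some k <= size s is missing, so searching 0..size s suffices;
   [find] returns the index, which equals the value in iota 0 _. *)
Definition mex (s : seq nat) : nat :=
  find (fun k => k \notin s) (iota 0 (size s).+1).

(* A finite simple graph is a symmetric irreflexive relation [e] on a finType
   [T]; a position of Grim is the set [S] of remaining vertices (the current
   graph is the subgraph induced by [S]). *)
Section Grim.
Variables (T : finType) (e : rel T).

Definition grim_clean (S : {set T}) : {set T} :=
  [set v in S | [exists u in S, e v u]].

Definition grim_move (S : {set T}) (v : T) : {set T} := grim_clean (S :\ v).

(* Sprague-Grundy value with fuel (each move strictly decreases #|S|,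
   so fuel #|S| is enough). *)
Fixpoint grim_sg_fuel (k : nat) (S : {set T}) : nat :=
  match k with
  | 0 => 0
  | k'.+1 => mex [seq grim_sg_fuel k' (grim_move S v) | v <- enum S]
  end.

Definition grim_sg (S : {set T}) : nat := grim_sg_fuel #|S| S.

(* Grim on the whole graph: isolated vertices are deleted before play. *)
Definition grim_graph_sg : nat := grim_sg (grim_clean [set: T]).
End Grim.

Definition path_rel (n : nat) : rel 'I_n :=
  fun i j => (i.+1 == j :> nat) || (j.+1 == i :> nat).

Arguments path_rel n : clear implicits.

(* From a heap of size h one removes one
   chip and leaves either one non-empty heap (of size h-1) or two non-empty
   heaps (a, h-1-a) with 1 <= a <= h-2; a heap of size <= 1 has no move. *)
Definition heap_options (h : nat) : seq (seq nat) :=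
  if 2 <= h then [:: h.-1] :: [seq [:: a; h.-1 - a] | a <- iota 1 (h - 2)]
  else [::].

Definition octal_moves (s : seq nat) : seq (seq nat) :=
  [seq take i s ++ o ++ drop i.+1 s
     | i <- iota 0 (size s), o <- heap_options (nth 0 s i)].

(* each move decreases the total number of chips by one *)
Fixpoint octal_sg_fuel (k : nat) (s : seq nat) : nat :=
  match k with
  | 0 => 0
  | k'.+1 => mex [seq octal_sg_fuel k' t | t <- octal_moves s]
  end.

Definition octal_sg (s : seq nat) : nat := octal_sg_fuel (sumn s) s.

(* Main.v *)
Require Import Defs.
From mathcomp Require Import all_boot.
From mathcomp Require Import zify.
Set Implicit Arguments. Unset Strict Implicit.

Lemma mex_spec l : (mex l \notin l) /\ (forall k, k < mex l -> k \in l).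
Proof.
have H : has (fun k => k \notin l) (iota 0 (size l).+1).
  apply/negPn/negP => /hasPn Hn.
  have : size (iota 0 (size l).+1) <= size l.
    apply: uniq_leq_size; first exact: iota_uniq.
    by move=> x /Hn; rewrite negbK.
  by rewrite size_iota ltnn.
have Hlt : mex l < (size l).+1 by rewrite -[X in _ < X](size_iota 0) -has_find.
split.
  by have := nth_find 0 H; rewrite nth_iota.
move=> k Hk. have := before_find 0 Hk. rewrite nth_iota ?add0n; last first.
  by apply: ltn_trans Hlt.
by move/negbFE.
Qed.

Lemma mex_eq l1 l2 : l1 =i l2 -> mex l1 = mex l2.
Proof.
move=> E; have [A1 B1] := mex_spec l1; have [A2 B2] := mex_spec l2.
case: (ltngtP (mex l1) (mex l2)) => // H.
  by move: (B2 _ H); rewrite -E (negbTE A1).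
by move: (B1 _ H); rewrite E (negbTE A2).
Qed.

Fixpoint rla (k : nat) (b : seq bool) : seq nat :=
  match b with
  | [::] => [:: k]
  | true :: b' => rla k.+1 b'
  | false :: b' => k :: rla 0 b'
  end.
Definition big (m : nat) : seq nat := filter (fun x => 1 < x) [:: m].
Definition runs (b : seq bool) := filter (fun x => 1 < x) (rla 0 b).

Lemma rla_nseq k m y : rla k (nseq m true ++ y) = rla (k + m) y.
Proof. by elim: m k => [|m IH] k /=; rewrite ?addn0 // IH addSnnS. Qed.

Lemma rla_catF k p y : rla k (p ++ false :: y) = rla k p ++ rla 0 y.
Proof. by elim: p k => [|[] p IH] k //=; rewrite IH. Qed.

Lemma runs_catF x y : runs (x ++ false :: y) = runs x ++ runs y.
Proof. by rewrite /runs rla_catF filter_cat. Qed.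

Lemma runs_nil : runs [::] = [::]. Proof. by []. Qed.

Lemma runs_catL p y : ~~ last false p -> runs (p ++ y) = runs p ++ runs y.
Proof.
case/lastP: p => [|p c]; first by [].
rewrite last_rcons => /negbTE ->.
by rewrite cat_rcons runs_catF -cats1 runs_catF runs_nil cats0.
Qed.

Lemma runs_catR x q : ~~ head false q -> runs (x ++ q) = runs x ++ runs q.
Proof.
case: q => [|c q] /=; first by rewrite !cats0.
by move/negbTE->; rewrite runs_catF.
Qed.

Lemma runs_nseq m : runs (nseq m true) = big m.
Proof. by rewrite /runs -[nseq m true]cats0 rla_nseq. Qed.

Fixpoint cl (pr : bool) (b : seq bool) : seq bool :=
  match b with
  | [::] => [::]
  | c :: b' => (c && (pr || head false b')) :: cl c b'
  end.

Lemma size_cl pr b : size (cl pr b) = size b.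
Proof. by elim: b pr => //= c b IH pr; rewrite IH. Qed.

Lemma nth_cl pr b i : nth false (cl pr b) i =
  nth false b i && ((if i is i'.+1 then nth false b i' else pr) || nth false b i.+1).
Proof.
elim: b pr i => [|c b IH] pr [|i] //=.
by rewrite IH; case: i.
Qed.

Lemma cl_catF pr x y : cl pr (x ++ false :: y) = cl pr x ++ false :: cl false y.
Proof.
elim: x pr => [|c x IH] pr //=; rewrite IH; congr (_ :: _).
by case: x {IH}.
Qed.

Lemma cl_catL p y : ~~ last false p -> cl false (p ++ y) = cl false p ++ cl false y.
Proof.
case/lastP: p => [|p c]; first by [].
rewrite last_rcons => /negbTE ->.
by rewrite cat_rcons cl_catF -cats1 cl_catF -catA.
Qed.

Lemma cl_catR pr x q : ~~ head false q -> cl pr (x ++ q) = cl pr x ++ cl false q.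
Proof.
case: q => [|c q] /=; first by rewrite !cats0.
by move/negbTE->; rewrite cl_catF.
Qed.

Lemma cl_true_nseq m : cl true (nseq m true) = nseq m true.
Proof. by elim: m => //= m ->. Qed.

Lemma runs_cl_nseq m : runs (cl false (nseq m true)) = big m.
Proof. by case: m => [|[|m]] //=; rewrite cl_true_nseq -(runs_nseq m.+2). Qed.

Lemma cl_nseq1 : cl false (nseq 1 true) = [:: false]. Proof. by []. Qed.

Lemma prefix_run b : exists h q, b = nseq h true ++ q /\ ~~ head false q.
Proof.
elim: b => [|[] b [h [q [E H]]]]; first by exists 0, [::].
  by exists h.+1, q; rewrite E.
by exists 0, (false :: b).
Qed.

Lemma last_ne p y : ~~ last true p -> last y p = last true p.
Proof. by case: p. Qed.

Lemma run_at b v : nth false b v ->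
  exists p h q j, [/\ b = p ++ nseq h true ++ q, ~~ last false p, ~~ head false q,
                    v = size p + j & j < h].
Proof.
elim: b v => [|c b IH] [|v] //=.
  move=> ->. have [h [q [E H]]] := prefix_run b.
  by exists [::], h.+1, q, 0; rewrite E.
move=> /IH [p [h [q [j [E Hp Hq Hv Hj]]]]].
case: c; case: p E Hp Hv => [|d p] E Hp Hv.
- by exists [::], h.+1, q, j.+1; rewrite E Hv.
- by exists [:: true, d & p], h, q, j; rewrite E Hv.
- by exists [:: false], h, q, j; rewrite E Hv.
- by exists [:: false, d & p], h, q, j; rewrite E Hv.
Qed.

Lemma run_mem_aux b k m : m \in rla k b ->
  (exists q, [/\ b = nseq (m - k) true ++ q, ~~ head false q & k <= m]) \/
  (exists p q, [/\ b = p ++ nseq m true ++ q, ~~ last true p & ~~ head false q]).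
Proof.
elim: b k => [|c b IH] k /=.
  by rewrite inE => /eqP->; left; exists [::]; rewrite subnn leqnn.
case: c.
  move=> /IH [[q [E Hq Hk]]|[p [q [E Hp Hq]]]].
    left; exists q; split => //; last by apply: ltnW.
    by rewrite E subnS; have -> : m - k = (m - k).-1.+1 by lia.
  by right; exists (true :: p), q; rewrite E.
rewrite inE => /orP [/eqP->|].
  by left; exists (false :: b); rewrite subnn.
move=> /IH [[q [E Hq Hk]]|[p [q [E Hp Hq]]]].
  by right; exists [:: false], q; rewrite E subn0.
right; exists (false :: p), q; rewrite E; split => //=.
by rewrite last_ne.
Qed.

Lemma run_mem b m : m \in runs b -> 0 < m ->
  exists p q, [/\ b = p ++ nseq m true ++ q, ~~ last false p & ~~ head false q].
Proof.
rewrite mem_filter => /andP [_ /run_mem_aux [[q [E Hq _]]|[p [q [E Hp Hq]]]]] _.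
  by exists [::], q; rewrite E subn0.
by exists p, q; split => //; rewrite last_ne.
Qed.

Lemma set_nth_mid p r : set_nth false (p ++ true :: r) (size p) false = p ++ false :: r.
Proof. by elim: p => //= c p ->. Qed.

Lemma nseq_split h j : j < h -> nseq h true = nseq j true ++ true :: nseq (h.-1 - j) true.
Proof.
move=> Hj; have -> : h = j + (h.-1 - j).+1 by lia.
by rewrite nseqD; congr (_ ++ _); congr (_ :: nseq _ _); lia.
Qed.

Definition memS n (S : {set 'I_n}) (i : nat) : bool :=
  [exists j : 'I_n, (val j == i) && (j \in S)].
Definition bits n (S : {set 'I_n}) : seq bool := mkseq (memS S) n.

Lemma size_bits n (S : {set 'I_n}) : size (bits S) = n.
Proof. by rewrite size_mkseq. Qed.

Lemma memS_ge n (S : {set 'I_n}) i : n <= i -> memS S i = false.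
Proof.
move=> Hi; apply/existsP => -[j /andP [/eqP Ej _]].
by move: (ltn_ord j); rewrite Ej ltnNge Hi.
Qed.

Lemma nth_bits n (S : {set 'I_n}) i : nth false (bits S) i = memS S i.
Proof.
case: (ltnP i n) => Hi; first by rewrite nth_mkseq.
by rewrite nth_default ?size_bits // memS_ge.
Qed.

Lemma memS_val n (S : {set 'I_n}) (v : 'I_n) : memS S v = (v \in S).
Proof.
apply/existsP/idP => [[j /andP [/eqP Ej Hj]]|Hv].
  by have -> : v = j by apply: val_inj.
by exists v; rewrite eqxx.
Qed.

Lemma memSP n (S : {set 'I_n}) i :
  reflect (exists2 j : 'I_n, val j = i & j \in S) (memS S i).
Proof.
apply: (iffP existsP) => [[j /andP [/eqP Ej Hj]]|[j Ej Hj]]; exists j => //.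
by rewrite Ej eqxx.
Qed.

Lemma memS_clean n (X : {set 'I_n}) i :
  memS (grim_clean (path_rel n) X) i =
  memS X i && ((if i is i'.+1 then memS X i' else false) || memS X i.+1).
Proof.
apply/memSP/idP => [[j Ej]|].
  rewrite inE => /andP [HjX /existsP [u /andP [HuX]]].
  rewrite /path_rel => /orP [] /eqP Eu.
  - rewrite -Ej; apply/andP; split; first by rewrite memS_val.
    by apply/orP; right; apply/memSP; exists u.
  - rewrite -Ej; apply/andP; split; first by rewrite memS_val.
    apply/orP; left; have -> : val j = u.+1 by rewrite Eu.
    by apply/memSP; exists u.
case/andP => /memSP [j Ej HjX] /orP [].
  case: i Ej => [|i] Ej //= /memSP [u Eu HuX].
  exists j => //; rewrite inE HjX /=; apply/existsP; exists u.
  by rewrite HuX /path_rel Ej Eu eqxx orbT.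
case/memSP => u Eu HuX; exists j => //; rewrite inE HjX /=; apply/existsP; exists u.
by rewrite HuX /path_rel Ej Eu eqxx.
Qed.

Lemma bits_clean n (X : {set 'I_n}) :
  bits (grim_clean (path_rel n) X) = cl false (bits X).
Proof.
apply: (@eq_from_nth _ false); first by rewrite size_cl !size_bits.
by move=> i _; rewrite nth_cl !nth_bits memS_clean; case: i => [|i]; rewrite ?nth_bits.
Qed.

Lemma bits_D1 n (S : {set 'I_n}) (v : 'I_n) :
  bits (S :\ v) = set_nth false (bits S) v false.
Proof.
apply: (@eq_from_nth _ false).
  by rewrite size_set_nth !size_bits; apply/esym/maxn_idPr; exact: ltn_ord.
move=> i _; rewrite nth_set_nth /= !nth_bits.
case: eqP => [->|Hne]; first by rewrite memS_val !inE eqxx.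
apply/memSP/memSP => [[j Ej]|[j Ej Hj]].
  by rewrite !inE => /andP [_ Hj]; exists j.
exists j => //; rewrite !inE Hj andbT; apply/eqP => Ejv.
by apply: Hne; rewrite -Ej Ejv.
Qed.

Lemma bits_move n (S : {set 'I_n}) (v : 'I_n) :
  bits (grim_move (path_rel n) S v) = cl false (set_nth false (bits S) v false).
Proof. by rewrite /grim_move bits_clean bits_D1. Qed.

Lemma clean_idem n (S : {set 'I_n}) :
  grim_clean (path_rel n) (grim_clean (path_rel n) S) = grim_clean (path_rel n) S.
Proof.
apply/setP => w; rewrite !inE.
apply/andP/andP => [[/andP [HwS Hex] _]|[HwS Hex]]; first by split.
split; first by rewrite HwS.
case/existsP: (Hex) => u /andP [HuS Hwu]; apply/existsP; exists u.
rewrite Hwu andbT inE HuS /=; apply/existsP; exists w.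
by rewrite HwS /path_rel orbC.
Qed.

Lemma card_move (T : finType) (e : rel T) (S : {set T}) (v : T) : v \in S -> #|grim_move e S v| < #|S|.
Proof.
move=> Hv; rewrite (cardsD1 v S) Hv add1n ltnS.
by apply: subset_leq_card; apply/subsetP => w; rewrite inE => /andP [].
Qed.

Lemma grim_fuel_aux (T : finType) (e : rel T) k :
  forall j (S : {set T}), j <= k -> #|S| <= j -> grim_sg_fuel e j S = grim_sg e S.
Proof.
elim: k => [|k IH] j S Hj HS.
  move: Hj HS; rewrite leqn0 => /eqP -> HS.
  by rewrite /grim_sg; move: HS; rewrite leqn0 => /eqP ->.
case: (leqP j k) => Hjk; first exact: IH.
have Ejk : j = k.+1 by apply/eqP; rewrite eqn_leq Hj.
subst j.
rewrite /grim_sg; case E: #|S| => [|m] /=.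
  move/eqP: E; rewrite cards_eq0 => /eqP ->; by rewrite enum_set0.
congr mex; apply/eq_in_map => v; rewrite mem_enum => Hv.
have Hc := card_move e Hv.
rewrite IH //; last by rewrite -ltnS (leq_trans Hc HS).
by rewrite IH // -ltnS -E.
Qed.

Lemma grim_fuel (T : finType) (e : rel T) k (S : {set T}) :
  #|S| <= k -> grim_sg_fuel e k S = grim_sg e S.
Proof. by move=> H; apply: (@grim_fuel_aux _ e k). Qed.

Lemma grim_rec (T : finType) (e : rel T) (S : {set T}) :
  grim_sg e S = mex [seq grim_sg e (grim_move e S v) | v <- enum S].
Proof.
rewrite -(grim_fuel e (leqnSn #|S|)) /=.
congr mex; apply/eq_in_map => v; rewrite mem_enum => Hv.
by rewrite grim_fuel // -ltnS ltnW // ltnS card_move.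
Qed.

Lemma heap_opt_spec h o : o \in heap_options h ->
  [/\ 2 <= h, (sumn o).+1 = h &
      exists2 j, j < h & filter (fun x => 1 < x) o = big j ++ big (h.-1 - j)].
Proof.
rewrite /heap_options; case: ifP => H2 //; rewrite inE => /orP [/eqP ->|].
  split => //=; first by rewrite addn0; lia.
  by exists 0; [lia | rewrite subn0].
case/mapP => a; rewrite mem_iota => Ha ->; split => //=.
  lia.
exists a; first lia.
by rewrite /big /=; case: (1 < a); case: (1 < h.-1 - a).
Qed.

Lemma heap_opt_ex h j : 2 <= h -> j < h ->
  exists2 o, o \in heap_options h & filter (fun x => 1 < x) o = big j ++ big (h.-1 - j).
Proof.
move=> H2 Hj; rewrite /heap_options H2.
case: (posnP j) => [->|Hj0].
  by exists [:: h.-1]; rewrite ?inE ?eqxx // subn0.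
case: (eqVneq j h.-1) => [->|Hjh].
  by exists [:: h.-1]; rewrite ?inE ?eqxx // subnn /= cats0.
exists [:: j; h.-1 - j]; last first.
  by rewrite /big /=; case: (1 < j); case: (1 < h.-1 - j).
rewrite inE; apply/orP; right; apply/mapP; exists j => //.
rewrite mem_iota; lia.
Qed.



Lemma movesP s t : reflect (exists i o, [/\ i < size s, o \in heap_options (nth 0 s i) &
                              t = take i s ++ o ++ drop i.+1 s]) (t \in octal_moves s).
Proof.
apply: (iffP allpairsPdep) => [[i [o [Hi Ho ->]]]|[i [o [Hi Ho ->]]]];
  exists i, o; split => //; move: Hi; rewrite mem_iota //.
Qed.

Lemma sumn_moves s t : t \in octal_moves s -> (sumn t).+1 = sumn s.
Proof.
case/movesP => i [o [Hi Ho ->]].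
have [_ Hs _] := heap_opt_spec Ho.
rewrite -{3}(cat_take_drop i s) (drop_nth 0 Hi) !sumn_cat /= -Hs; lia.
Qed.

Lemma octal_fuel_aux k : forall j s, j <= k -> sumn s <= j -> octal_sg_fuel j s = octal_sg s.
Proof.
have Hnil : forall s, sumn s = 0 -> octal_moves s = [::].
  move=> s Hs; case E: (octal_moves s) => [|t l] //.
  have : t \in octal_moves s by rewrite E inE eqxx.
  by move/sumn_moves; rewrite Hs.
elim: k => [|k IH] j s Hj HS.
  move: Hj HS; rewrite leqn0 => /eqP -> HS.
  by rewrite /octal_sg; move: HS; rewrite leqn0 => /eqP ->.
case: (leqP j k) => Hjk; first exact: IH.
have Ejk : j = k.+1 by apply/eqP; rewrite eqn_leq Hj.
subst j.
rewrite /octal_sg; case E: (sumn s) => [|m] /=.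
  by rewrite (Hnil s E).
congr mex; apply/eq_in_map => t Ht.
have Hc := sumn_moves Ht.
have Hm : m <= k by rewrite -ltnS -E.
rewrite IH //; last by rewrite -ltnS Hc.
by rewrite IH //; rewrite -ltnS -E Hc.
Qed.

Lemma octal_fuel k s : sumn s <= k -> octal_sg_fuel k s = octal_sg s.
Proof. by move=> H; apply: (@octal_fuel_aux k). Qed.

Lemma octal_rec s : octal_sg s = mex [seq octal_sg t | t <- octal_moves s].
Proof.
rewrite -(octal_fuel (leqnSn (sumn s))) /=.
congr mex; apply/eq_in_map => t Ht.
by rewrite octal_fuel // -ltnS (sumn_moves Ht).
Qed.

Lemma perm_mid (A B C D F : seq nat) x :
  perm_eq (A ++ x :: B) (C ++ x :: D) -> perm_eq (A ++ F ++ B) (C ++ F ++ D).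
Proof.
move=> H.
have HA := permEl (perm_catCA A [:: x] B).
have HC := permEl (perm_catCA C [:: x] D).
have H1 : perm_eq (x :: A ++ B) (x :: C ++ D).
  apply: (perm_trans _ HC); apply: (perm_trans _ H); by rewrite perm_sym.
rewrite perm_cons in H1.
rewrite perm_catCA; apply: (perm_trans _ (permEl (perm_catCA F C D))).
by rewrite perm_cat2l.
Qed.

Lemma key n (S : {set 'I_n}) p h q j (v : 'I_n) :
  grim_clean (path_rel n) S = S -> bits S = p ++ nseq h true ++ q ->
  ~~ last false p -> ~~ head false q -> j < h -> val v = size p + j ->
  [/\ 2 <= h, v \in S, runs (bits S) = runs p ++ h :: runs q &
      runs (bits (grim_move (path_rel n) S v)) = runs p ++ (big j ++ big (h.-1 - j)) ++ runs q].
Proof.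
move=> Hcl Eb Hp Hq Hj Hv.
have Ecl : cl false (bits S) = bits S by rewrite -bits_clean Hcl.
rewrite Eb cl_catL // cl_catR // in Ecl.
move/eqP: Ecl; rewrite eqseq_cat ?size_cl // => /andP [/eqP Ep].
rewrite eqseq_cat ?size_cl // => /andP [/eqP Eh /eqP Eq].
have H2 : 2 <= h.
  case: (ltnP 1 h) => // Hh; have E1 : h = 1 by lia.
  by move: Eh; rewrite E1 cl_nseq1.
split => //.
- rewrite -memS_val -nth_bits Eb Hv nth_cat ltnNge leq_addr /= addKn.
  by rewrite nth_cat size_nseq Hj nth_nseq Hj.
- rewrite Eb runs_catL // runs_catR // runs_nseq /big /=.
  by rewrite (_ : 1 < h = true) //.
rewrite bits_move Eb Hv (nseq_split Hj).
rewrite (_ : p ++ (nseq j true ++ true :: nseq (h.-1 - j) true) ++ q =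
   (p ++ nseq j true) ++ true :: (nseq (h.-1 - j) true ++ q)); last by rewrite -!catA.
rewrite (_ : size p + j = size (p ++ nseq j true)); last by rewrite size_cat size_nseq.
rewrite set_nth_mid cl_catF.
rewrite cl_catL // cl_catR // Ep Eq runs_catF runs_catL // runs_catR //.
by rewrite !runs_cl_nseq !catA.
Qed.

Lemma main k : forall n (S : {set 'I_n}) s, #|S| < k ->
  grim_clean (path_rel n) S = S ->
  perm_eq (filter (fun x => 1 < x) s) (runs (bits S)) ->
  grim_sg (path_rel n) S = octal_sg s.
Proof.
elim: k => [|k IH] n S s // HS Hcl Hr.
rewrite grim_rec octal_rec; apply: mex_eq => x.
have Hsplit : forall i, i < size s -> filter (fun x => 1 < x) s =
    filter (fun x => 1 < x) (take i s) ++ (if 1 < nth 0 s i then nth 0 s i :: [::] else [::])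
    ++ filter (fun x => 1 < x) (drop i.+1 s).
  move=> i Hi; rewrite -{1}(cat_take_drop i s) (drop_nth 0 Hi) filter_cat /=.
  by case: ifP.
apply/mapP/mapP => [[v Hv ->]|[t Ht ->]].
- rewrite mem_enum in Hv.
  have : nth false (bits S) v by rewrite nth_bits memS_val.
  case/run_at => p [h [q [j [Eb Hp Hq Ev Hj]]]].
  have [H2 _ Rb Rm] := key Hcl Eb Hp Hq Hj Ev.
  have Hh : h \in s.
    have : h \in runs (bits S) by rewrite Rb mem_cat inE eqxx orbT.
    by rewrite -(perm_mem Hr) mem_filter => /andP [].
  set i := index h s.
  have Hi : i < size s by rewrite index_mem.
  have Ni : nth 0 s i = h by rewrite nth_index.
  have [o Ho Fo] := heap_opt_ex H2 Hj.
  exists (take i s ++ o ++ drop i.+1 s).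
    by apply/movesP; exists i, o; rewrite Ni.
  apply: IH.
  + by rewrite -ltnS; apply: leq_trans HS; rewrite ltnS card_move.
  + by rewrite /grim_move clean_idem.
  + rewrite Rm !filter_cat Fo; apply: (@perm_mid _ _ _ _ _ h).
    by have := Hsplit _ Hi; rewrite Ni H2 /= => <-; rewrite -Rb.
- case/movesP: Ht => i [o [Hi Ho ->]].
  set h := nth 0 s i.
  have [H2 _ [j Hj Fo]] := heap_opt_spec Ho.
  have Hh : h \in runs (bits S).
    by rewrite -(perm_mem Hr) mem_filter H2 mem_nth.
  have [p [q [Eb Hp Hq]]] := run_mem Hh (ltnW H2).
  have Hv : size p + j < n.
    by rewrite -(size_bits S) Eb !size_cat size_nseq; lia.
  have [_ HvS Rb Rm] := key (v := Ordinal Hv) Hcl Eb Hp Hq Hj erefl.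
  exists (Ordinal Hv); first by rewrite mem_enum.
  symmetry; apply: IH.
  + by rewrite -ltnS; apply: leq_trans HS; rewrite ltnS card_move.
  + by rewrite /grim_move clean_idem.
  + rewrite Rm !filter_cat Fo; apply: (@perm_mid _ _ _ _ _ h).
    by have := Hsplit _ Hi; rewrite -/h H2 /= => <-; rewrite -Rb.
Qed.

Theorem theorem5p4 (n : nat) :
  grim_graph_sg (path_rel n) = octal_sg [:: n].
Proof.
rewrite /grim_graph_sg; apply: (@main (#|grim_clean (path_rel n) [set: 'I_n]|.+1)) => //.
  exact: clean_idem.
have Eset : bits [set: 'I_n] = nseq n true.
  apply: (@eq_from_nth _ false); first by rewrite size_bits size_nseq.
  move=> i; rewrite size_bits => Hi; rewrite nth_bits nth_nseq Hi.
  by apply/memSP; exists (Ordinal Hi); rewrite ?inE.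
by rewrite bits_clean Eset runs_cl_nseq.
Qed.
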